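(* Asymptotically almost surely (as $n\to\infty$), $T\sim\mathcal{R}(n,2)$ has the property that every minimal feedback arc set of $T$ contains a matching of size $n-1$.
   Context: $\mathcal{R}(n,2)$ denotes the probability space of bipartite tournaments with vertex classes $A_1,A_2$, each of size $n$, where every edge between $A_1$ and $A_2$ is oriented independently and uniformly at random. A feedback arc set of a directed graph $T$ is a set of edges (viewed as a spanning subgraph) meeting every directed cycle; it is minimal if no proper subset of it is a feedback arc set. *)

(* Defs.v *)
From HB Require Import structures.
From mathcomp Require Import all_boot all_order all_algebra.
From mathcomp Require Import all_classical all_reals all_analysis.
Set Implicit Arguments. Unset Strict Implicit. Unset Printing Implicit Defensive.
Import Order.TTheory GRing.Theory Num.Theory.

(* Bipartite tournament with classes A1 = 'I_n (left, inl) and A2 = 'I_n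
   (right, inr).  The edge set is 'I_n * 'I_n: the pair (i, j) is the edge
   between i in A1 and j in A2.  An orientation o : {ffun 'I_n*'I_n -> bool}
   orients (i,j) from i to j when o (i,j) = true, and from j to i otherwise. *)
Definition vert n := ('I_n + 'I_n)%type.
Definition orient n := {ffun 'I_n * 'I_n -> bool}.

Definition arc n (o : orient n) : rel (vert n) := fun x y =>
  match x, y with
  | inl i, inr j => o (i, j)
  | inr j, inl i => ~~ o (i, j)
  | _, _ => false
  end.

Definition und n (x y : vert n) : option ('I_n * 'I_n) :=
  match x, y with
  | inl i, inr j => Some (i, j)
  | inr j, inl i => Some (i, j)
  | _, _ => None
  end.

Definition directed_cycle n (o : orient n) (s : seq (vert n)) : bool :=
  [&& s != [::], uniq s & cycle (arc o) s].

Definition meets n (F : {set 'I_n * 'I_n}) (s : seq (vert n)) : bool :=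
  has (fun x => if und x (next s x) is Some e then e \in F else false) s.

Definition feedback_arc_set n (o : orient n) (F : {set 'I_n * 'I_n}) : Prop :=
  forall s, directed_cycle o s -> meets F s.

Definition minimal_fas n (o : orient n) (F : {set 'I_n * 'I_n}) : Prop :=
  feedback_arc_set o F /\
  forall G : {set 'I_n * 'I_n}, G \proper F -> ~ feedback_arc_set o G.

Definition matching n (M : {set 'I_n * 'I_n}) : Prop :=
  forall e1 e2, e1 \in M -> e2 \in M -> e1 != e2 ->
    e1.1 != e2.1 /\ e1.2 != e2.2.

Definition good n (o : orient n) : Prop :=
  forall F, minimal_fas o F ->
    exists M : {set 'I_n * 'I_n},
      [/\ M \subset F, matching M & #|M| = n.-1].

(* probability in R(n,2): orientations are uniform on {ffun 'I_n*'I_n -> bool},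
   i.e. each edge is oriented independently and uniformly *)
Definition prob_R (R : realType) n (P : orient n -> Prop) : R :=
  (#|[set o : orient n | `[< P o >]]|%:R / (2 ^ (n * n))%:R)%R.

(* Main.v *)
From HB Require Import structures.
From mathcomp Require Import all_boot all_order.
From mathcomp Require Import zify.
Require Import Defs.
Set Implicit Arguments. Unset Strict Implicit. Unset Printing Implicit Defensive.

Section Hall.
Variables (A B : finType) (E : {set A * B}).

Definition nbr (T : {set A}) (B0 : {set B}) : {set B} :=
  [set b in B0 | [exists a in T, (a, b) \in E]].

Definition matchG (M : {set A * B}) : Prop :=
  forall e1 e2, e1 \in M -> e2 \in M -> e1 != e2 -> e1.1 != e2.1 /\ e1.2 != e2.2.

Lemma nbr_sub T B0 : nbr T B0 \subset B0.
Proof. by apply/subsetP => b; rewrite inE => /andP[]. Qed.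

Lemma hall_def k : forall (A0 : {set A}) (B0 : {set B}) (d : nat), #|A0| <= k ->
  (forall T : {set A}, T \subset A0 -> #|T| <= #|nbr T B0| + d) ->
  exists M : {set A * B}, [/\ M \subset E, M \subset setX A0 B0, matchG M & #|A0| <= #|M| + d].
Proof.
elim: k => [|k IH] A0 B0 d hk hT.
  exists set0; split; rewrite ?sub0set //; last by move: hk; rewrite leqn0 => /eqP ->.
  by move=> e1 e2; rewrite inE.
have [->|/set0Pn [a aA0]] := eqVneq A0 set0.
  exists set0; split; rewrite ?sub0set ?cards0 //.
  by move=> e1 e2; rewrite inE.
have cardA : #|A0| = #|A0 :\ a|.+1 by rewrite (cardsD1 a A0) aA0.
have [nb|nonb] := boolP [exists b in B0, (a, b) \in E]; last first.
  have hd : 0 < d.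
    have := hT [set a]; rewrite sub1set aA0 cards1 => /(_ isT).
    suff -> : #|nbr [set a] B0| = 0 by [].
    apply/eqP; rewrite cards_eq0; apply/eqP/setP => b; rewrite !inE.
    apply/negbTE/negP => /andP[bB /existsP[a' /andP[]]]; rewrite inE => /eqP -> abE.
    by move/negP: nonb; apply; apply/existsP; exists b; rewrite bB.
  have hk' : #|A0 :\ a| <= k by move: hk; rewrite cardA ltnS.
  have hT' : forall T : {set A}, T \subset A0 :\ a -> #|T| <= #|nbr T B0| + d.-1.
    move=> T TA.
    have := hT (a |: T).
    rewrite subUset sub1set aA0 (subset_trans TA (subsetDl _ _)) => /(_ isT).
    have aT : a \notin T by apply/negP => /(subsetP TA); rewrite !inE eqxx.
    rewrite cardsU1 aT add1n.
    have -> : nbr (a |: T) B0 = nbr T B0.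
      apply/setP => b; rewrite !inE; case bB: (b \in B0) => //=.
      apply/existsP/existsP => [[a' /andP[]]|[a' /andP[a'T h]]]; last first.
        by exists a'; rewrite !inE a'T orbT.
      rewrite !inE => /orP[/eqP ->|a'T] h; last by exists a'; rewrite a'T.
      by move/negP: nonb; case; apply/existsP; exists b; rewrite bB.
    by rewrite -(ltn_predK hd) addnS ltnS.
  have [M [ME MX Mm Mc]] := IH _ _ _ hk' hT'.
  exists M; split => //.
    by apply: (subset_trans MX); apply: setXS => //; apply: subsetDl.
  by rewrite cardA -(ltn_predK hd) addnS ltnS.
have [/existsP [T /and4P[TA Tn0 TnA tight]] | notight] :=
  boolP [exists T : {set A}, [&& T \subset A0, T != set0, T != A0 &
                                  #|nbr T B0| + d <= #|T| ]].
  have TpA : T \proper A0 by rewrite properEneq TnA TA.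
  have hk1 : #|T| <= k by rewrite -ltnS; exact: leq_trans (proper_card TpA) hk.
  have hT1 : forall T' : {set A}, T' \subset T -> #|T'| <= #|nbr T' (nbr T B0)| + d.
    move=> T' T'T.
    have -> : nbr T' (nbr T B0) = nbr T' B0.
      apply/setP => b; rewrite !inE.
      case: (b \in B0) => //=.
      case h': [exists a0 in T', (a0, b) \in E]; rewrite ?andbF ?andbT //.
      move/existsP: h' => [a' /andP[a'T h]].
      by apply/existsP; exists a'; rewrite (subsetP T'T).
    by apply: hT; apply: subset_trans TA.
  have [M1 [M1E M1X M1m M1c]] := IH _ _ _ hk1 hT1.
  have hk2 : #|A0 :\: T| <= k.
    rewrite -ltnS; apply: leq_trans hk; apply: proper_card; rewrite properEneq subsetDl andbT.
    have [a' a'T] := set0Pn _ Tn0.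
    apply/negP => /eqP/setP /(_ a'); rewrite !inE a'T (subsetP TA) //.
  have hT2 : forall T' : {set A}, T' \subset A0 :\: T ->
      #|T'| <= #|nbr T' (B0 :\: nbr T B0)| + 0.
    move=> T' T'D.
    have T'A : T' \subset A0 by apply: subset_trans T'D (subsetDl _ _).
    have h := hT (T :|: T'); rewrite subUset TA T'A in h; have {}h := h isT.
    have dTT : T :&: T' = set0.
      apply/setP => x; rewrite !inE; apply/negbTE/negP => /andP[xT /(subsetP T'D)].
      by rewrite !inE xT.
    have := cardsUI T T'; rewrite dTT cards0 addn0 => hU.
    have hN : nbr (T :|: T') B0 \subset nbr T B0 :|: nbr T' (B0 :\: nbr T B0).
      apply/subsetP => b; rewrite !inE => /andP[bB /existsP[x /andP[]]].
      rewrite inE => /orP[xT|xT'] h'.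
        by apply/orP; left; rewrite bB /=; apply/existsP; exists x; rewrite xT.
      rewrite bB /=; case bT: [exists a0 in T, (a0, b) \in E] => //=.
      by apply/existsP; exists x; rewrite xT'.
    have := subset_leq_card hN.
    have [h2 _] := leq_card_setU (nbr T B0) (nbr T' (B0 :\: nbr T B0)).
    move=> h1; lia.
  have [M2 [M2E M2X M2m M2c]] := IH _ _ _ hk2 hT2.
  have dM : [disjoint M1 & M2].
    rewrite -setI_eq0; apply/eqP/setP => e; rewrite !inE.
    apply/negbTE/negP => /andP[/(subsetP M1X) h1 /(subsetP M2X) h2].
    by move: h1 h2; rewrite !inE => /andP[-> _].
  exists (M1 :|: M2); split.
  - by rewrite subUset M1E M2E.
  - rewrite subUset; apply/andP; split.
      apply: subset_trans M1X _; apply: setXS => //; exact: nbr_sub.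
    apply: subset_trans M2X _; apply: setXS; exact: subsetDl.
  - move=> e1 e2; rewrite !inE => /orP[h1|h1] /orP[h2|h2].
    + exact: M1m.
    + move: (subsetP M1X _ h1) (subsetP M2X _ h2); rewrite !inE.
      move=> /andP[e1T e1N] /andP[/andP[e2T _] /andP[e2N _]] _.
      by split; apply/negP => /eqP E12; [move: e2T; rewrite -E12 e1T | move: e2N; rewrite -E12 e1N].
    + move: (subsetP M1X _ h2) (subsetP M2X _ h1); rewrite !inE.
      move=> /andP[e1T e1N] /andP[/andP[e2T _] /andP[e2N _]] _.
      by split; apply/negP => /eqP E12; [move: e2T; rewrite E12 e1T | move: e2N; rewrite E12 e1N].
    + exact: M2m.
  - rewrite cardsU (disjoint_setI0 dM) cards0 subn0.
    have := cardsID T A0; rewrite (setIidPr TA).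
    lia.
have [b /andP[bB abE]] := existsP nb.
have hT3 : forall T : {set A}, T \subset A0 :\ a -> #|T| <= #|nbr T (B0 :\ b)| + d.
  move=> T TA.
  have [->|Tn0] := eqVneq T set0; first by rewrite cards0.
  have TA0 : T \subset A0 by apply: subset_trans TA (subsetDl _ _).
  have TnA : T != A0.
    by apply/negP => /eqP TE; move: (subsetP TA a); rewrite TE aA0 !inE eqxx => /(_ isT).
  have hlt : #|T| < #|nbr T B0| + d.
    rewrite ltnNge; apply/negP => h; move/negP: notight; apply.
    by apply/existsP; exists T; rewrite TA0 Tn0 TnA h.
  have hN : nbr T B0 \subset b |: nbr T (B0 :\ b).
    apply/subsetP => y; rewrite !inE => /andP[yB ex].
    by case: (y == b) => //=; rewrite yB.
  have := subset_leq_card hN; rewrite cardsU1.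
  case: (b \in nbr T (B0 :\ b)) => /=; lia.
have hk' : #|A0 :\ a| <= k by move: hk; rewrite cardA ltnS.
have [M [ME MX Mm Mc]] := IH _ _ _ hk' hT3.
have abM : (a, b) \notin M.
  by apply/negP => /(subsetP MX); rewrite !inE eqxx.
exists ((a, b) |: M); split.
- by rewrite subUset sub1set abE ME.
- rewrite subUset sub1set !inE aA0 bB /=.
  by apply: subset_trans MX _; apply: setXS; apply: subsetDl.
- have hM : forall e, e \in M -> e.1 != a /\ e.2 != b.
    by move=> e /(subsetP MX); rewrite !inE => /andP[/andP[]] ? _ /andP[].
  move=> e1 e2; rewrite !inE => /orP[/eqP->|h1] /orP[/eqP->|h2].
  + by rewrite eqxx.
  + by have [? ?] := hM _ h2; rewrite /= !(eq_sym a) !(eq_sym b).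
  + by have [? ?] := hM _ h1.
  + exact: Mm.
- rewrite cardsU1 abM cardA; lia.
Qed.
End Hall.


Lemma sub_card (T : finType) (M : {set T}) k : k <= #|M| -> exists S : {set T}, S \subset M /\ #|S| = k.
Proof.
elim: k => [|k IH] hk; first by exists set0; rewrite sub0set cards0.
have [S [SM Sc]] := IH (ltnW hk).
have : S \proper M by rewrite properEcard SM Sc hk.
case/properP => _ [x xM xS].
exists (x |: S); rewrite subUset sub1set xM SM cardsU1 xS Sc; split => //.
Qed.

Section Graph.
Variables (n : nat) (o : orient n) (F : {set 'I_n * 'I_n}).
Hypothesis fasF : feedback_arc_set o F.

Definition darc : rel (vert n) := fun x y =>
  arc o x y && (if und x y is Some e then e \notin F else false).

Lemma darc_arc : subrel darc (arc o).
Proof. by move=> x y /andP[]. Qed.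

Lemma darc_acyc u v : darc u v -> ~~ connect darc v u.
Proof.
move=> huv; apply/negP => /connectP [p pth Eu]; subst u.
move: huv; case/shortenP: pth => p' pth' uq _ huv.
set s := v :: p'.
have cyc : cycle darc s by rewrite /s /= rcons_path pth' huv.
have dc : directed_cycle o s.
  by rewrite /directed_cycle /s; rewrite uq (sub_cycle darc_arc cyc).
have := fasF dc; rewrite /meets => /hasP [x xs].
have := next_cycle cyc xs; rewrite /darc => /andP[_].
by case: (und x (next s x)) => // e /negbTE ->.
Qed.

Definition pos (v : vert n) : nat := #|[set w | connect darc w v]|.

Lemma pos_lt u v : darc u v -> pos u < pos v.
Proof.
move=> huv; apply: proper_card; apply/properP; split.
  apply/subsetP => w; rewrite !inE => hw.
  by apply: connect_trans hw (connect1 huv).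
by exists v; rewrite !inE ?connect0 // (negbTE (darc_acyc huv)).
Qed.

Lemma o_pos x y : (x, y) \notin F -> o (x, y) = (pos (inl x) < pos (inr y)).
Proof.
move=> hF; case h: (o (x, y)).
  by apply/esym; apply: pos_lt; rewrite /darc /= h hF.
have : darc (inr y) (inl x) by rewrite /darc /= h hF.
by move/pos_lt => lt; apply/esym/negbTE; rewrite -leqNgt ltnW.
Qed.

Lemma o_pos' x y : (x, y) \notin F -> ~~ o (x, y) -> pos (inr y) < pos (inl x).
Proof. by move=> hF h; apply: pos_lt; rewrite /darc /= h hF. Qed.

End Graph.

Definition cnt n (Z : {set 'I_n}) (q : 'I_n -> nat) (t : nat) : nat :=
  #|[set z in Z | q z < t]|.

Lemma cnt_mono n (Z : {set 'I_n}) (q : 'I_n -> nat) t1 t2 : t1 <= t2 -> @cnt n Z q t1 <= cnt Z q t2.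
Proof.
move=> le; apply: subset_leq_card; apply/subsetP => z; rewrite !inE => /andP[-> h].
exact: leq_trans h le.
Qed.

Lemma cnt_strict n (Z : {set 'I_n}) (q : 'I_n -> nat) (z : 'I_n) t : z \in Z -> q z < t -> @cnt n Z q (q z) < cnt Z q t.
Proof.
move=> zZ lt; apply: proper_card; apply/properP; split.
  apply/subsetP => w; rewrite !inE => /andP[-> h]; exact: ltn_trans h lt.
by exists z; rewrite !inE zZ ?lt // ltnn.
Qed.

Lemma cnt_le n (Z : {set 'I_n}) (q : 'I_n -> nat) t : @cnt n Z q t <= #|Z|.
Proof. by apply: subset_leq_card; apply/subsetP => z; rewrite inE => /andP[]. Qed.

Lemma cnt_lt n (Z : {set 'I_n}) (q : 'I_n -> nat) (z : 'I_n) : z \in Z -> @cnt n Z q (q z) < #|Z|.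
Proof.
move=> zZ; apply: proper_card; apply/properP; split.
  by apply/subsetP => w; rewrite inE => /andP[].
by exists z; rewrite // inE zZ ltnn.
Qed.

Definition famR n (Z : {set 'I_n}) (k : nat) : pred {ffun 'I_n -> 'I_n.+1} :=
  family (fun i => if i \in Z then [pred v : 'I_n.+1 | v < k] else pred1 ord0).
Definition famS n (Z : {set 'I_n}) (k : nat) : pred {ffun 'I_n -> 'I_n.+1} :=
  family (fun i => if i \in Z then [pred v : 'I_n.+1 | v <= k] else pred1 ord0).

Definition E1b n (o : orient n) (X Y : {set 'I_n}) : bool :=
  [exists r in famR Y #|Y|, exists s in famS X #|Y|,
     [forall x in X, forall y in Y, o (x, y) == (s x <= r y)]].
Definition E2b n (o : orient n) (X Y : {set 'I_n}) : bool :=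
  [exists r in famR X #|X|, exists s in famS Y #|X|,
     [forall x in X, forall y in Y, o (x, y) == (r x < s y)]].

Lemma card_le_n n (Z : {set 'I_n}) : #|Z| <= n.
Proof. by have := max_card (mem Z); rewrite card_ord. Qed.

Lemma struct_E n (o : orient n) F (X Y : {set 'I_n}) : feedback_arc_set o F ->
  (forall x y, x \in X -> y \in Y -> (x, y) \notin F) -> E1b o X Y && E2b o X Y.
Proof.
move=> fasF noF.
set P := pos o F.
have oP x y : x \in X -> y \in Y -> o (x, y) = (P (inl x) < P (inr y)).
  by move=> xX yY; apply: o_pos => //; apply: noF.
have inK m : m <= #|Y| -> nat_of_ord (inord m : 'I_n.+1) = m.
  by move=> h; rewrite inordK // ltnS (leq_trans h) // card_le_n.
have inK' m : m <= #|X| -> nat_of_ord (inord m : 'I_n.+1) = m.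
  by move=> h; rewrite inordK // ltnS (leq_trans h) // card_le_n.
apply/andP; split.
  set qY := fun y => P (inr y).
  pose r := [ffun y => if y \in Y then inord (cnt Y qY (qY y)) else ord0 : 'I_n.+1].
  pose s := [ffun x => if x \in X then inord (cnt Y qY (P (inl x))) else ord0 : 'I_n.+1].
  apply/existsP; exists r; apply/andP; split.
    apply/familyP => y; rewrite ffunE; case: ifP => yY //=.
    by rewrite inE inK ?cnt_lt // ltnW // cnt_lt.
  apply/existsP; exists s; apply/andP; split.
    apply/familyP => x; rewrite ffunE; case: ifP => xX //=.
    by rewrite inE inK ?cnt_le.
  apply/forallP => x; apply/implyP => xX; apply/forallP => y; apply/implyP => yY.
  rewrite !ffunE xX yY (inK _ (cnt_le _ _ _)) (inK _ (ltnW (cnt_lt _ yY))) oP //.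
  case: (ltnP (P (inl x)) (P (inr y))) => h.
    by rewrite cnt_mono // ltnW.
  have h' : P (inr y) < P (inl x).
    apply: o_pos' => //; first exact: noF.
    by rewrite oP // -leqNgt.
  by rewrite leqNgt cnt_strict.
set qX := fun x => P (inl x).
pose r := [ffun x => if x \in X then inord (cnt X qX (qX x)) else ord0 : 'I_n.+1].
pose s := [ffun y => if y \in Y then inord (cnt X qX (P (inr y))) else ord0 : 'I_n.+1].
apply/existsP; exists r; apply/andP; split.
  apply/familyP => x; rewrite ffunE; case: ifP => xX //=.
  by rewrite inE inK' ?cnt_lt // ltnW // cnt_lt.
apply/existsP; exists s; apply/andP; split.
  apply/familyP => y; rewrite ffunE; case: ifP => yY //=.
  by rewrite inE inK' ?cnt_le.
apply/forallP => x; apply/implyP => xX; apply/forallP => y; apply/implyP => yY.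
rewrite !ffunE xX yY !inK'; try exact: cnt_le; try exact: (ltnW (cnt_lt _ xX)).
rewrite oP //.
case: (ltnP (P (inl x)) (P (inr y))) => h.
  by rewrite cnt_strict.
have h' : P (inr y) < P (inl x).
  apply: o_pos' => //; first exact: noF.
  by rewrite oP // -leqNgt.
by rewrite eq_sym eqbF_neg -leqNgt cnt_mono.
Qed.

Definition badb n (o : orient n) : bool :=
  [exists X : {set 'I_n}, exists Y : {set 'I_n},
     (n.+2 <= #|X| + #|Y|) && E1b o X Y && E2b o X Y].

Lemma not_bad_good n (o : orient n) : ~~ badb o -> good o.
Proof.
move=> nb F [fasF _].
have cT : #|[set: 'I_n]| = n by rewrite cardsT card_ord.
have [/forallP h|/forallPn [T hT]] :=
  boolP [forall T : {set 'I_n}, #|T| <= #|nbr F T setT| + 1].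
  have hk : #|[set: 'I_n]| <= n by rewrite cT.
  have [M [MF _ Mm Mc]] := @hall_def _ _ F n setT setT 1 hk (fun T _ => h T).
  rewrite cT in Mc.
  have hM : n.-1 <= #|M| by lia.
  have [S [SM Sc]] := sub_card hM.
  exists S; split => //; first exact: subset_trans SM MF.
  by move=> e1 e2 h1 h2; apply: Mm; apply: (subsetP SM).
move/negP: nb; case; apply/existsP; exists T; apply/existsP; exists (~: nbr F T setT).
have := cardsC (nbr F T setT); rewrite card_ord => hC.
rewrite -ltnNge in hT.
rewrite -andbA; apply/andP; split.
  rewrite -[in X in X < _]hC -addSn ltn_add2r -addn1; exact: hT.
apply: (struct_E fasF) => x y xT; rewrite !inE => /negP yN; apply/negP => xyF; apply: yN.
by apply/existsP; exists x; rewrite xT.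
Qed.


Lemma union_bound_seq (T K : finType) (P : K -> pred T) (s : seq K) :
  #|[set x | has (fun k => P k x) s]| <= \sum_(k <- s) #|[set x | P k x]|.
Proof.
elim: s => [|k s IH]; first by rewrite big_nil leqn0 cards_eq0; apply/eqP/setP => x; rewrite !inE.
rewrite big_cons.
have -> : [set x | has (fun k0 => P k0 x) (k :: s)] =
          [set x | P k x] :|: [set x | has (fun k => P k x) s].
  by apply/setP => x; rewrite !inE.
have [h _] := leq_card_setU [set x | P k x] [set x | has (fun k => P k x) s].
by apply: leq_trans h _; rewrite leq_add2l.
Qed.

Lemma union_bound (T K : finType) (K0 : {pred K}) (P : K -> pred T) :
  #|[set x | [exists k in K0, P k x]]| <= \sum_(k in K0) #|[set x | P k x]|.
Proof.
rewrite -big_enum; apply: leq_trans (union_bound_seq P (enum K0)).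
apply: subset_leq_card; apply/subsetP => x; rewrite !inE => /existsP[k /andP[kK pk]].
by apply/hasP; exists k; rewrite ?mem_enum.
Qed.

Lemma card_lt_ord m k : k <= m -> #|[pred v : 'I_m | v < k]| = k.
Proof.
move=> km.
have H : [pred v : 'I_m | v < k] =i [set widen_ord km x | x in 'I_k].
  move=> v; rewrite !inE; apply/idP/imsetP => [vk|[x _ ->]]; last by rewrite /= ltn_ord.
  by exists (Ordinal vk) => //; apply: val_inj.
rewrite (eq_card H) card_imset ?card_ord //; move=> x y /(congr1 val) /= /val_inj //.
Qed.

Lemma card_family_prod (aT rT : finType) (F : aT -> pred rT) :
  #|(family F : pred {ffun aT -> rT})| = \prod_(x : aT) #|F x|.
Proof.
by rewrite card_family foldrE big_map big_enum.
Qed.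

Lemma count_fix (D : finType) (S : {set D}) (h : D -> bool) :
  #|[set o : {ffun D -> bool} | [forall e in S, o e == h e]]| * 2 ^ #|S| = 2 ^ #|D|.
Proof.
have H : [set o : {ffun D -> bool} | [forall e in S, o e == h e]] =i
         family (fun e => if e \in S then pred1 (h e) else predT).
  move=> o; rewrite !inE; apply/forallP/familyP => H e; have := H e.
    by case: (e \in S) => //= /eqP ->; rewrite inE.
  by case: (e \in S) => //=; rewrite inE.
rewrite (eq_card H) card_family_prod.
rewrite (eq_bigr (fun e => if e \notin S then 2 else 1)); last first.
  by move=> e _; case: (e \in S); rewrite /= ?card1 ?card_bool.
rewrite -big_mkcond /=.
rewrite prod_nat_const -expnD.
have := cardsC S; rewrite cardsE => <-.
by rewrite addnC; congr (2 ^ (_ + _)); apply: eq_card => e; rewrite !inE.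
Qed.

Lemma count_event n (K : finType) (K0 : {pred K}) (g : K -> 'I_n * 'I_n -> bool)
    (S : {set 'I_n * 'I_n}) :
  #|[set o : orient n | [exists k in K0, [forall e in S, o e == g k e]]]| * 2 ^ #|S|
    <= #|K0| * 2 ^ (n * n).
Proof.
apply: leq_trans (leq_mul (union_bound K0 _) (leqnn _)) _.
rewrite big_distrl /=.
have -> : n * n = #|{: ('I_n * 'I_n)%type}| by rewrite card_prod card_ord.
rewrite -sum_nat_const; apply: leq_sum => k _.
by rewrite (count_fix S (g k)).
Qed.

Lemma card_fam n (Z : {set 'I_n}) (A : pred 'I_n.+1) :
  #|(family (fun i => if i \in Z then A else pred1 ord0) : pred {ffun 'I_n -> 'I_n.+1})|
    = #|A| ^ #|Z|.
Proof.
rewrite card_family_prod (eq_bigr (fun i => if i \in Z then #|A| else 1)); last first.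
  by move=> i _; case: (i \in Z); rewrite ?card1.
by rewrite -big_mkcond prod_nat_const.
Qed.

Lemma card_famR n (Z : {set 'I_n}) k : k <= n.+1 -> #|famR Z k| = k ^ #|Z|.
Proof.
move=> h; rewrite /famR card_family_prod (eq_bigr (fun i => if i \in Z then k else 1)).
  by rewrite -big_mkcond prod_nat_const.
by move=> i _; case: (i \in Z); rewrite ?card1 ?card_lt_ord.
Qed.

Lemma card_famS n (Z : {set 'I_n}) k : k <= n -> #|famS Z k| = k.+1 ^ #|Z|.
Proof.
move=> h; rewrite /famS card_family_prod (eq_bigr (fun i => if i \in Z then k.+1 else 1)).
  by rewrite -big_mkcond prod_nat_const.
move=> i _; case: (i \in Z); rewrite ?card1 //.
by rewrite -(card_lt_ord (m := n.+1) (k := k.+1)).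
Qed.

Lemma pair_bound n (o0 : orient n) (X Y : {set 'I_n}) :
  #|[set o : orient n | E1b o X Y && E2b o X Y]| * 2 ^ (#|X| * #|Y|) <=
  (if #|Y| <= #|X| then #|Y| ^ #|Y| * #|Y|.+1 ^ #|X|
   else #|X| ^ #|X| * #|X|.+1 ^ #|Y|) * 2 ^ (n * n).
Proof.
have bn := card_le_n Y; have an := card_le_n X.
case: ifP => hab.
  pose K0 := [predX famR Y #|Y| & famS X #|Y|].
  pose g := fun (k : {ffun 'I_n -> 'I_n.+1} * {ffun 'I_n -> 'I_n.+1}) (e : 'I_n * 'I_n) =>
              k.2 e.1 <= k.1 e.2.
  have := count_event K0 g (setX X Y).
  rewrite cardsX cardX card_famR ?card_famS ?(leq_trans bn) // -mulnA.
  apply: leq_trans; rewrite leq_mul2r; apply/orP; right.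
  apply: subset_leq_card; apply/subsetP => o; rewrite !inE => /andP[+ _].
  case/existsP => r /andP[rR /existsP[s /andP[sS /forallP H]]].
  apply/existsP; exists (r, s); rewrite inE /= rR sS /=.
  apply/forallP => -[x y]; apply/implyP; rewrite inE /= => /andP[xX yY].
  by have /implyP/(_ xX)/forallP/(_ y)/implyP/(_ yY) := H x.
pose K0 := [predX famR X #|X| & famS Y #|X|].
pose g := fun (k : {ffun 'I_n -> 'I_n.+1} * {ffun 'I_n -> 'I_n.+1}) (e : 'I_n * 'I_n) =>
            k.1 e.1 < k.2 e.2.
have := count_event K0 g (setX X Y).
rewrite cardsX cardX card_famR ?card_famS ?(leq_trans an) // -mulnA.
apply: leq_trans; rewrite leq_mul2r; apply/orP; right.
apply: subset_leq_card; apply/subsetP => o; rewrite !inE => /andP[_].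
case/existsP => r /andP[rR /existsP[s /andP[sS /forallP H]]].
apply/existsP; exists (r, s); rewrite inE /= rR sS /=.
apply/forallP => -[x y]; apply/implyP; rewrite inE /= => /andP[xX yY].
by have /implyP/(_ xX)/forallP/(_ y)/implyP/(_ yY) := H x.
Qed.

Lemma sum_avg (I : finType) (P : pred I) (t : I -> nat) c M :
  (forall i, P i -> c * t i <= M) -> #|P| <= c -> \sum_(i | P i) t i <= M.
Proof.
move=> H hc.
have [P0|Pp] := posnP #|P|.
  rewrite big_pred0 // => i; apply/negbTE/negP => Pi.
  by move: P0; rewrite (cardD1 i) [i \in _]Pi.
rewrite -(leq_pmul2r Pp) big_distrl /=.
apply: leq_trans (_ : \sum_(i | P i) M <= _).
  apply: leq_sum => i Pi; apply: leq_trans (H i Pi).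
  by rewrite mulnC leq_mul2r hc orbT.
by rewrite sum_nat_const mulnC.
Qed.

Definition mab (a b : nat) : nat :=
  if b <= a then b ^ b * b.+1 ^ a else a ^ a * a.+1 ^ b.

Lemma bad_sum n :
  (forall a b, a <= n -> b <= n -> n.+2 <= a + b ->
     n ^ 3 * 'C(n, a) * 'C(n, b) * mab a b <= 2 ^ (a * b)) ->
  n ^ 3 * #|[set o : orient n | badb o]| <= n.+1 ^ 2 * 2 ^ (n * n).
Proof.
move=> Hn.
pose K0 := [pred XY : {set 'I_n} * {set 'I_n} | n.+2 <= #|XY.1| + #|XY.2|].
pose P := fun (XY : {set 'I_n} * {set 'I_n}) (o : orient n) => E1b o XY.1 XY.2 && E2b o XY.1 XY.2.
have h1 : #|[set o : orient n | badb o]| <= \sum_(XY in K0) #|[set o | P XY o]|.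
  apply: leq_trans (union_bound K0 P); apply: subset_leq_card; apply/subsetP => o.
  rewrite inE /badb => /existsP[X /existsP[Y /andP[/andP[h e1] e2]]].
  by rewrite inE; apply/existsP; exists (X, Y); rewrite inE /= h /P /= e1 e2.
apply: leq_trans (leq_mul (leqnn _) h1) _.
rewrite big_distrr /=.
rewrite (partition_big (fun XY : {set 'I_n} * {set 'I_n} => (inord #|XY.1| : 'I_n.+1, inord #|XY.2| : 'I_n.+1)) xpredT) //=.
have -> : n.+1 ^ 2 * 2 ^ (n * n) = \sum_(j : 'I_n.+1 * 'I_n.+1) 2 ^ (n * n).
  by rewrite sum_nat_const card_prod card_ord mulnn.
apply: leq_sum => -[a b] _.
apply: (@sum_avg _ _ _ ('C(n, a) * 'C(n, b))).
  move=> [X Y] /andP[]; rewrite /K0 inE /= => hab /eqP [ea eb].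
  have ha : #|X| = a by rewrite -ea inordK // ltnS card_le_n.
  have hb : #|Y| = b by rewrite -eb inordK // ltnS card_le_n.
  have := pair_bound (finfun (fun _ => true)) X Y.
  rewrite /= ha hb in hab * => hp.
  have hm := Hn a b (ltn_ord a) (ltn_ord b) hab.
  rewrite -(@leq_pmul2r (2 ^ (a * b))) ?expn_gt0 //.
  set B := #|_| in hp *.
  set C := n ^ 3 * 'C(n, a) * 'C(n, b) in hm *.
  have e1 : 'C(n, a) * 'C(n, b) * (n ^ 3 * B) * 2 ^ (a * b) = C * (B * 2 ^ (a * b)).
    by rewrite /C; lia.
  rewrite e1; apply: leq_trans (leq_mul (leqnn C) hp) _.
  rewrite mulnA mulnC leq_mul2l hm orbT //.
apply: leq_trans (_ : #|[set XY : {set 'I_n} * {set 'I_n} | (#|XY.1| == a) && (#|XY.2| == b)]| <= _).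
  apply: subset_leq_card; apply/subsetP => -[X Y]; rewrite !inE /= => /andP[_ /eqP [ea eb]].
  by rewrite -ea -eb !inordK ?ltnS ?card_le_n ?eqxx.
have -> : [set XY : {set 'I_n} * {set 'I_n} | (#|XY.1| == a) && (#|XY.2| == b)] =
          setX [set X : {set 'I_n} | #|X| == a] [set Y : {set 'I_n} | #|Y| == b].
  by apply/setP => -[X Y]; rewrite !inE.
by rewrite cardsX !card_draws card_ord.
Qed.


Lemma bin_le_pow n k : 'C(n, k) <= n ^ k.
Proof.
have h : 'C(n, k) * k`! <= n ^ k.
  rewrite bin_ffact ffact_prod (_ : n ^ k = \prod_(i < k) n); last by rewrite prod_nat_const card_ord.
  by apply: leq_prod => i _; apply: leq_subr.
by apply: leq_trans _ h; rewrite leq_pmulr ?fact_gt0.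
Qed.

Lemma sq_le_3pow b : 2 <= b -> b.+1 ^ 2 <= 3 ^ b.
Proof.
elim: b => // b IH; rewrite leq_eqVlt => /orP[/eqP <- //|hb].
have h := IH hb; have e : 3 ^ b.+1 = 3 * 3 ^ b by rewrite expnS.
rewrite e; nia.
Qed.

Lemma ffact_ge a k : k <= a -> (a - k.-1) ^ k <= a ^_ k.
Proof.
move=> ka; rewrite ffact_prod (_ : (a - k.-1) ^ k = \prod_(i < k) (a - k.-1)); last by rewrite prod_nat_const card_ord.
apply: leq_prod => i _; apply: leq_sub2l.
by have := ltn_ord i; case: k {ka} i => // k i; rewrite ltnS.
Qed.

Lemma binom_lower a : 9 <= a -> 'C(a, 9) * 3 ^ a <= 4 ^ a * 3 ^ 9.
Proof.
move=> ha.
have -> : 4 = 3 + 1 by [].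
rewrite expnDn.
have o9 : 9 < a.+1 by rewrite ltnS.
rewrite (bigD1 (Ordinal o9)) //= exp1n muln1.
rewrite mulnDl; apply: leq_trans _ (leq_addr _ _).
by rewrite -mulnA -expnD subnK.
Qed.

Lemma mul_pos a b : 0 < a -> 0 < b -> 0 < a * b.
Proof. by move=> ha hb; rewrite muln_gt0 ha hb. Qed.

Definition K9 : nat := locked (2 ^ 9 * 9`! * 3 ^ 9).
Lemma K9E : K9 = 2 ^ 9 * (9`! * 3 ^ 9).
Proof. rewrite /K9 -lock; exact: esym (mulnA _ _ _). Qed.
Lemma K9_gt0 : 0 < K9.
Proof.
rewrite K9E; apply: mul_pos; first by rewrite expn_gt0.
by apply: mul_pos; [exact: fact_gt0 | rewrite expn_gt0].
Qed.

Definition A0 : nat := 256 * K9 + 16.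

Lemma poly_exp a : A0 <= a -> 256 * a ^ 8 * 3 ^ a <= 4 ^ a.
Proof.
move=> ha.
have a16 : 16 <= a by apply: leq_trans ha; rewrite /A0 leq_addl.
have a9 : 9 <= a by apply: leq_trans a16.
rewrite -(leq_pmul2r K9_gt0).
have h1 : 9`! * 'C(a, 9) * 3 ^ a <= 9`! * (4 ^ a * 3 ^ 9).
  by rewrite -mulnA leq_mul2l binom_lower ?orbT.
have h2 : (a - 8) ^ 9 <= 9`! * 'C(a, 9).
  by rewrite mulnC bin_ffact; apply: (ffact_ge (k := 9)).
have h3 : a ^ 9 <= 2 ^ 9 * (a - 8) ^ 9.
  by rewrite -expnMn leq_exp2r //; lia.
have h4 : a ^ 9 * 3 ^ a <= 4 ^ a * K9.
  apply: leq_trans (leq_mul h3 (leqnn _)) _.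
  rewrite K9E [X in _ <= X]mulnCA -mulnA leq_mul2l; apply/orP; right.
  apply: leq_trans (leq_mul h2 (leqnn _)) _.
  apply: leq_trans h1 _.
  by rewrite mulnCA.
apply: leq_trans h4.
have h5 : 256 * K9 <= a by apply: leq_trans ha; rewrite /A0 leq_addr.
have e1 : 256 * a ^ 8 * 3 ^ a * K9 = (256 * K9) * (a ^ 8 * 3 ^ a) by lia.
have e2 : a ^ 9 * 3 ^ a = a * (a ^ 8 * 3 ^ a) by rewrite expnS mulnA.
by rewrite e1 e2 leq_mul2r h5 orbT.
Qed.

Lemma core n a b : 2 * A0 <= n -> a <= n -> b <= a -> n.+2 <= a + b ->
  n ^ 3 * 'C(n, a) * 'C(n, b) * (b ^ b * b.+1 ^ a) <= 2 ^ (a * b).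
Proof.
move=> hn ha hba hab.
have b2 : 2 <= b by lia.
have bn : b <= n by lia.
have n1 : 0 < n by lia.
have hA : A0 <= a by lia.
have hCa : 'C(n, a) <= n ^ (b - 2).
  rewrite -(bin_sub ha); apply: leq_trans (bin_le_pow _ _) _.
  by apply: leq_pexp2l => //; lia.
have hCb := bin_le_pow n b.
have hbb : b ^ b <= n ^ b by rewrite leq_exp2r //; lia.
have hQ : n ^ 3 * 'C(n, a) * 'C(n, b) * (b ^ b * b.+1 ^ a) <= n ^ (4 * b) * b.+1 ^ a.
  apply: leq_trans (_ : n ^ 3 * n ^ (b - 2) * n ^ b * (n ^ b * b.+1 ^ a) <= _).
    apply: leq_mul; last by rewrite leq_mul2r hbb orbT.
    by apply: leq_mul => //; apply: leq_mul.
  rewrite mulnA -!expnD leq_mul2r; apply/orP; right.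
  by apply: leq_pexp2l => //; lia.
apply: leq_trans hQ _.
rewrite -(leq_exp2r _ _ (isT : 0 < 2)).
have e1 : (n ^ (4 * b) * b.+1 ^ a) ^ 2 = (n ^ 8) ^ b * (b.+1 ^ 2) ^ a.
  by rewrite expnMn -!expnM; congr (_ * _); congr (_ ^ _); lia.
have e2 : (2 ^ (a * b)) ^ 2 = (4 ^ a) ^ b by rewrite -!expnM (_ : 4 = 2 ^ 2) // -expnM; congr (_ ^ _); lia.
rewrite e1 e2.
have h3 : (b.+1 ^ 2) ^ a <= (3 ^ a) ^ b.
  rewrite [X in _ <= X]( _ : _ = (3 ^ b) ^ a); last by rewrite -!expnM mulnC.
  clear -b2; case: a => [|a]; first by rewrite !expn0.
  by rewrite leq_exp2r // sq_le_3pow.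
apply: leq_trans (leq_mul (leqnn _) h3) _.
rewrite -expnMn leq_exp2r; last lia.
have h8 : n ^ 8 <= 256 * a ^ 8.
  by rewrite (_ : 256 = 2 ^ 8) // -expnMn leq_exp2r //; lia.
apply: leq_trans (leq_mul h8 (leqnn _)) _.
exact: poly_exp.
Qed.


Lemma bad_bound n : 2 * A0 <= n -> n * #|[set o : orient n | badb o]| <= 4 * 2 ^ (n * n).
Proof.
move=> hn.
have n1 : 0 < n by apply: leq_trans hn; rewrite /A0; lia.
have h : n ^ 3 * #|[set o : orient n | badb o]| <= n.+1 ^ 2 * 2 ^ (n * n).
  apply: bad_sum => a b ha hb hab; rewrite /mab; case: ifP => h.
    exact: core.
  have hab' : n.+2 <= b + a by rewrite addnC.
  have hlt : a <= b by rewrite ltnW // ltnNge h.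
  have := core hn hb hlt hab'.
  by rewrite (mulnC b a) -!mulnA (mulnCA ('C(n, b))).
have h2 : n.+1 ^ 2 <= 4 * n ^ 2 by nia.
rewrite -(@leq_pmul2l (n ^ 2)) ?expn_gt0 ?n1 //.
rewrite mulnA -expnSr; apply: leq_trans h _.
by rewrite mulnA leq_mul2r (mulnC _ 4) h2 orbT.
Qed.

Lemma card_orient n : #|{: orient n}| = 2 ^ (n * n).
Proof. by rewrite card_ffun card_bool card_prod card_ord. Qed.

Lemma A0_pos : 0 < 2 * A0.
Proof. rewrite /A0; lia. Qed.

Unset Implicit Arguments.
From mathcomp Require Import all_algebra.
From mathcomp Require Import all_classical all_reals all_analysis.
From mathcomp Require Import lra.
Import Order.TTheory GRing.Theory Num.Theory.
Import numFieldNormedType.Exports.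
Local Open Scope classical_set_scope.
Local Open Scope ring_scope.

Lemma good_card n :
  (#|[set o : orient n | `[< good o >]]%SET| <= 2 ^ (n * n))%N /\
  (2 ^ (n * n) <= #|[set o : orient n | `[< good o >]]%SET| + #|[set o : orient n | badb o]%SET|)%N.
Proof.
split; first by rewrite -card_orient max_card.
rewrite -card_orient.
have := cardsC [set o : orient n | badb o]%SET.
move=> <-; rewrite [X in (X <= _)%N]addnC leq_add2r; apply: subset_leq_card; apply/fintype.subsetP => o.
rewrite !inE => nb; exact: not_bad_good.
Qed.

Theorem proposition3p1 (R : realType) :
  prob_R R (@good n) @[n --> \oo] --> (1 : R).
Proof.
apply/cvgrPdist_le => e e0.
have e8 : 0 < e / 8 by rewrite divr_gt0.
have H1 := near_infty_natSinv_lt (PosNum e8).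
near=> n.
have hn : (2 * A0 <= n)%N by near: n; exists (2 * A0)%N => // m.
have hinv : n.+1%:R^-1 < e / 8 :> R by near: n; exact: H1.
have [hG1 hG2] := good_card n.
have hB := bad_bound hn.
rewrite /prob_R.
set G := #|_| in hG1 hG2 *.
set Bd := #|_| in hG2 hB.
set T := (2 ^ (n * n))%N in hG1 hG2 hB *.
have Tp : 0 < T%:R :> R by rewrite ltr0n expn_gt0.
have hG1' : G%:R <= T%:R :> R by rewrite ler_nat.
have hG2' : T%:R <= G%:R + Bd%:R :> R by rewrite -natrD ler_nat.
have hB' : n%:R * Bd%:R <= 4 * T%:R :> R by rewrite -!natrM ler_nat.
have n1 : 1 <= n%:R :> R.
  by rewrite ler1n; apply: leq_trans hn; exact: A0_pos.
have h8 : 8 < e * (n%:R + 1).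
  have np : 0 < n.+1%:R :> R by rewrite ltr0n.
  move: hinv; rewrite -div1r ltr_pdivrMr // -natr1 => h.
  rewrite mulrAC ltr_pdivlMr // mul1r in h.
  have e1 : e * n.+1%:R = e * (n%:R + 1) by rewrite natr1.
  rewrite -e1; exact: h.
have h4 : 4 < e * n%:R.
  have hex : e <= e * n%:R by rewrite ler_peMr // ltW.
  rewrite mulrDr mulr1 in h8; clear -h8 hex e0; lra.
have hBd : Bd%:R <= e * T%:R.
  have h' : 4 * T%:R <= (e * n%:R) * T%:R by rewrite ler_wpM2r // ?ltW.
  have : n%:R * Bd%:R <= n%:R * (e * T%:R).
    by rewrite mulrA (mulrC n%:R e); exact: le_trans hB' h'.
  by rewrite ler_pM2l //; apply: lt_le_trans n1.
have hGT : 1 - e <= G%:R / T%:R.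
  rewrite ler_pdivlMr // mulrBl mul1r; clear -hG2' hBd; clearbody G Bd T; lra.
rewrite ger0_norm; last by rewrite subr_ge0 ler_pdivrMr // mul1r.
clear -hGT; lra.
Unshelve. all: by end_near.
Qed.
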